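(* For all $A\subseteq E$, $\Lambda(A,P)\le\bar\Lambda(A,P)\le(b+1)\cdot\Lambda(A,P)$, where $b=\max_i|E_2\cap p_i|$ is the maximum number of edges that a user path shares with other user paths.
   Context: $G=(V,E)$ is a simple directed acyclic graph with capacities $C\in\mathbb{R}_{\ge0}^E$ and $\gamma$ is a budget with $0<\gamma\le\min_eC(e)$. User paths $P=\{p_1,\dots,p_k\}$ are directed paths (edge sets, not necessarily disjoint) with initial values $\lambda_i\ge0$, $\sum_{i:e\in p_i}\lambda_i\le C(e)$ for all $e$. For $A\subseteq E$ let $\tilde C_A(e)=C(e)-\gamma\mathbf{1}_{\{e\in A\}}$; $T(A,P)$ is the optimal value of: maximize $\sum_i\tilde\lambda_i$ s.t. $\sum_{i:e\in p_i}\tilde\lambda_i\le\tilde C_A(e)$ for all $e$, $0\le\tilde\lambda_i\le\lambda_i$; $\Lambda(A,P)=\sum_i\lambda_i-T(A,P)$. Let $E_1$ be the set of edges lying on exactly one user path and $E_2$ those lying on at least two. Define $\tilde\lambda^{(1)}_{iA}=\min\big(\lambda_i,\min_{e\in p_i\cap E_1}\tilde C_A(e)\big)$, $\tilde\lambda^{(2)}_{iA}=\tilde\lambda^{(1)}_{iA}\cdot\prod_{e\in p_i\cap E_2,\ \tilde C_A(e)\le\sum_{j:e\in p_j}\lambda_j}\frac{\tilde C_A(e)}{\sum_{j:e\in p_j}\lambda_j}$, and $\bar\Lambda(A,P)=\sum_i\lambda_i-\sum_i\tilde\lambda^{(2)}_{iA}$. *)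

(* Defs.v *)
From HB Require Import structures.
From mathcomp Require Import all_boot all_order all_algebra.
From mathcomp Require Import boolp classical_sets reals.
Set Implicit Arguments. Unset Strict Implicit. Unset Printing Implicit Defensive.
Import Order.TTheory GRing.Theory Num.Theory.
Local Open Scope ring_scope.
Local Open Scope classical_set_scope.

Section Defs.
Variables (R : realType) (V : finType).
Notation edge := (V * V)%type.

Definition erel (E : {set edge}) : rel V := fun u v => (u, v) \in E.

Definition simple_dag (E : {set edge}) : Prop :=
  (forall v : V, (v, v) \notin E) /\
  (forall (x : V) (s : seq V), path (erel E) x s -> last x s = x -> s = [::]).

Definition is_dipath (E : {set edge}) (p : {set edge}) : Prop :=
  exists (x : V) (s : seq V),
    path (erel E) x s /\ p = finset (fun e : edge => e \in zip (x :: s) s).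

Variables (k : nat) (P : 'I_k -> {set edge}).

Definition Ctil (C : edge -> R) (gamma : R) (A : {set edge}) (e : edge) : R :=
  C e - (if e \in A then gamma else 0).

Definition load (lam : 'I_k -> R) (e : edge) : R := \sum_(j | e \in P j) lam j.

Definition feasible (E : {set edge}) (C : edge -> R) (gamma : R)
    (A : {set edge}) (lam lt : 'I_k -> R) : Prop :=
  (forall e, e \in E -> \sum_(i | e \in P i) lt i <= Ctil C gamma A e) /\
  (forall i, 0 <= lt i <= lam i).

Definition Tval E C gamma A lam : R :=
  sup [set t | exists lt, feasible E C gamma A lam lt /\ t = \sum_i lt i].

Definition Lambda E C gamma A lam : R := \sum_i lam i - Tval E C gamma A lam.

Definition nb_paths (e : edge) : nat := #|[set i | e \in P i]|.
Definition E1 (E : {set edge}) : {set edge} := [set e in E | nb_paths e == 1%N].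
Definition E2 (E : {set edge}) : {set edge} := [set e in E | (2 <= nb_paths e)%N].

Definition lam1 E C gamma A (lam : 'I_k -> R) (i : 'I_k) : R :=
  \big[Num.min/lam i]_(e | (e \in P i) && (e \in E1 E)) Ctil C gamma A e.

Definition lam2 E C gamma A (lam : 'I_k -> R) (i : 'I_k) : R :=
  lam1 E C gamma A lam i *
  \prod_(e | [&& e \in P i, e \in E2 E & Ctil C gamma A e <= load lam e])
     (Ctil C gamma A e / load lam e).

Definition Lambdabar E C gamma A lam : R := \sum_i lam i - \sum_i lam2 E C gamma A lam i.

Definition bmax (E : {set edge}) : nat := \max_(i < k) #|E2 E :&: P i|.

End Defs.

(* Main.v *)
Require Import Defs.
From HB Require Import structures.
From mathcomp Require Import all_boot all_order all_algebra.
From mathcomp Require Import boolp classical_sets reals.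
From mathcomp Require Import lra.
Import Order.TTheory GRing.Theory Num.Theory.
Local Open Scope ring_scope.

Section H.
Variables (R : realType) (V : finType) (E : {set V * V})
    (C : V * V -> R) (gamma : R) (k : nat) (P : 'I_k -> {set V * V})
    (lam : 'I_k -> R) (A : {set V * V}).
Hypothesis gE : forall e, e \in E -> gamma <= C e.
Hypothesis gpos : 0 < gamma.
Hypothesis lam0 : forall i, 0 <= lam i.

Local Notation Ct := (Ctil C gamma A).
Local Notation ld := (load P lam).
Local Notation l1 := (lam1 P E C gamma A lam).
Local Notation l2 := (lam2 P E C gamma A lam).
Local Notation f e := (Ct e / ld e).
Local Notation tight e := ((e \in E2 P E) && (Ct e <= ld e)).

Lemma Ct_ge0 e : e \in E -> 0 <= Ct e.
Proof.
move=> eE; rewrite /Ctil; have := gE e eE; case: (e \in A) => /= h; [lra|by rewrite subr0 (le_trans (ltW gpos) h)].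
Qed.

Lemma ld_ge0 e : 0 <= ld e.
Proof. by apply: sumr_ge0 => i _; apply: lam0. Qed.

Lemma f01 e : tight e -> 0 <= f e <= 1.
Proof.
case/andP=> e2 le; have eE : e \in E by move: e2; rewrite inE => /andP[].
have c0 := Ct_ge0 _ eE; have l0 := ld_ge0 e.
have [z|nz] := eqVneq (ld e) 0.
  by rewrite z invr0 mulr0 lexx ler01.
have lp : 0 < ld e by rewrite lt0r nz l0.
by rewrite divr_ge0 //= ler_pdivrMr // mul1r.
Qed.

Lemma l1_le i : l1 i <= lam i.
Proof.
rewrite /lam1; elim/big_rec: _ => [|e x _ H]; first exact: lexx.
by rewrite ge_min H orbT.
Qed.

Lemma l1_ge0 i : 0 <= l1 i.
Proof.
rewrite /lam1; elim/big_rec: _ => [|e x /andP[_ eE1] H]; first exact: lam0.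
rewrite le_min H andbT; apply: Ct_ge0.
by move: eE1; rewrite inE => /andP[].
Qed.

Lemma l1_le_Ct i e : e \in P i -> e \in E1 P E -> l1 i <= Ct e.
Proof.
move=> ei e1; rewrite /lam1 (bigD1 e) /=; last by rewrite ei e1.
by rewrite ge_min lexx.
Qed.

Lemma nbE e : nb_paths P e = #|[set i | e \in P i]|.
Proof. apply: eq_card => i; rewrite [RHS]inE; exact: asboolb. Qed.

Lemma E1_unique i e : e \in P i -> e \in E1 P E -> forall j, (e \in P j) = (j == i).
Proof.
move=> ei; rewrite inE nbE => /andP[_ /cards1P [x hx]] j.
have hi : i \in [set i | e \in P i] by rewrite inE.
rewrite hx inE in hi; move/eqP: hi => ->.
by move/setP/(_ j): hx; rewrite !inE.
Qed.

Lemma sum_E1 (g : 'I_k -> R) i e : e \in P i -> e \in E1 P E ->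
  \sum_(j | e \in P j) g j = g i.
Proof.
move=> ei e1; rewrite (eq_bigl (fun j => j == i)); first by rewrite big_pred1_eq.
by move=> j; rewrite (E1_unique _ _ ei e1).
Qed.

Lemma lt_le_l1 lt i : feasible P E C gamma A lam lt -> lt i <= l1 i.
Proof.
case=> fc fb; rewrite /lam1; elim/big_rec: _ => [|e x /andP[ei e1] H].
  by case/andP: (fb i).
rewrite le_min H andbT.
have eE : e \in E by move: e1; rewrite inE => /andP[].
by have := fc e eE; rewrite (sum_E1 lt _ _ ei e1).
Qed.

Lemma prod01 i : let p := \prod_(e | [&& e \in P i, e \in E2 P E & Ct e <= ld e]) f e in
  0 <= p <= 1 /\ 1 - p <= \sum_(e | [&& e \in P i, e \in E2 P E & Ct e <= ld e]) (1 - f e).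
Proof.
move=> p; rewrite /p; apply: (big_rec2 (fun x y => 0 <= x <= 1 /\ 1 - x <= y)).
  by rewrite ler01 lexx subrr.
move=> e x y /and3P[_ e2 le] [/andP[x0 x1] h].
have /andP[f0 f1] := f01 e (introT andP (conj e2 le)).
split; first by apply/andP; split; nra.
nra.
Qed.


Lemma exch (g : 'I_k -> V * V -> R) (Q : pred (V * V)) :
  \sum_i \sum_(e | (e \in P i) && Q e) g i e = \sum_(e | Q e) \sum_(i | e \in P i) g i e.
Proof.
under eq_bigr do rewrite big_mkcond.
rewrite exchange_big /= [RHS]big_mkcond; apply: eq_bigr => e _.
case: (Q e); first by rewrite [RHS]big_mkcond; apply: eq_bigr => i _; rewrite andbT.
by apply: big1 => i _; rewrite andbF.
Qed.

Lemma prodQ01 (Q : pred (V * V)) : (forall e, Q e -> tight e) ->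
  0 <= \prod_(e | Q e) f e <= 1.
Proof.
move=> hQ; apply: (big_rec (fun x => 0 <= x <= 1)); first by rewrite ler01 lexx.
move=> e x /hQ /f01 /andP[f0 f1] /andP[x0 x1]; apply/andP; split; nra.
Qed.

Lemma l2_bounds i : 0 <= l2 i <= l1 i.
Proof.
rewrite /lam2; have /andP[p0 p1] : 0 <= \prod_(e | [&& e \in P i, e \in E2 P E & Ct e <= ld e]) f e <= 1.
  by apply: prodQ01 => e /and3P[_ a b]; rewrite a b.
have a0 := l1_ge0 i.
by apply/andP; split; [exact: mulr_ge0 | exact: ler_piMr].
Qed.

Lemma l2_le_f i e : e \in P i -> tight e -> l2 i <= lam i * f e.
Proof.
move=> ei te; rewrite /lam2 (bigD1 e) /=; last by rewrite ei.
have /andP[p0 p1] : 0 <= \prod_(e' | [&& e' \in P i, e' \in E2 P E & Ct e' <= ld e'] && (e' != e)) f e' <= 1.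
  by apply: prodQ01 => e' /andP[/and3P[_ a b] _]; rewrite a b.
have /andP[f0 f1] := f01 e te.
have al := l1_le i; have a0 := l1_ge0 i.
set q := \prod_(_ | _) _ in p0 p1 *.
have h1 : l1 i * f e * q <= l1 i * f e by apply: ler_piMr => //; exact: mulr_ge0.
rewrite [X in X <= _]mulrA; apply: le_trans h1 _; exact: ler_wpM2r.
Qed.


Lemma l2_feas : feasible P E C gamma A lam l2.
Proof.
split; last first.
  move=> i; have /andP[a b] := l2_bounds i.
  by rewrite a /= (le_trans b (l1_le i)).
move=> e eE; have c0 := Ct_ge0 e eE.
have [n0|n2|n1] := ltngtP (nb_paths P e) 1.
- rewrite big_pred0 // => j; move: n0; rewrite nbE ltnS leqn0 => /eqP/cards0_eq/setP/(_ j).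
  by rewrite !inE.
- have e2 : e \in E2 P E by rewrite inE eE n2.
  have [te|nte] := boolP (Ct e <= ld e).
    apply: (le_trans (ler_sum _ (fun j ej => l2_le_f j e ej _))); first by rewrite e2 te.
    rewrite -mulr_suml.
    have [z|nz] := eqVneq (ld e) 0; first by rewrite /load in z *; rewrite z mul0r.
    by rewrite mulrC divfK.
  rewrite -ltNge in nte; apply: le_trans (ltW nte).
  apply: ler_sum => j _; have /andP[_ b] := l2_bounds j; exact: le_trans b (l1_le j).
- have e1 : e \in E1 P E by rewrite inE eE n1.
  move: n1; rewrite nbE => /eqP/cards1P [x hx].
  have xe : e \in P x by move/setP/(_ x): hx; rewrite !inE eqxx.
  rewrite (sum_E1 l2 x e xe e1).
  apply: le_trans (l1_le_Ct x e xe e1); by case/andP: (l2_bounds x).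
Qed.


Lemma aux (lm a t p s : R) : t <= a -> a <= lm -> 0 <= a -> 0 <= p <= 1 -> 1 - p <= s ->
  lm - a * p <= (lm - t) + lm * s.
Proof. move=> h1 h2 h3 /andP[h4 h5] h6; nra. Qed.

Lemma part2 lt : feasible P E C gamma A lam lt ->
  \sum_i (lam i - l2 i) <= (bmax P E).+1%:R * (\sum_i lam i - \sum_i lt i).
Proof.
move=> hf; have [fc fb] := hf.
have lt0 i : 0 <= lam i - lt i by case/andP: (fb i) => _ h; rewrite subr_ge0.
rewrite -sumrB.
apply: (@le_trans _ _ (\sum_i ((lam i - lt i) +
   \sum_(e | [&& e \in P i, e \in E2 P E & Ct e <= ld e]) lam i * (1 - f e)))).
  apply: ler_sum => i _; rewrite -mulr_sumr /lam2.
  have [/andP[p0 p1] h] := prod01 i.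
  apply: aux => //; [exact: lt_le_l1|exact: l1_le|exact: l1_ge0|by rewrite p0 p1].
rewrite big_split /= (exch (fun i e => lam i * (1 - f e)) (fun e => tight e)).
apply: (@le_trans _ _ (\sum_i (lam i - lt i) +
   \sum_(e | tight e) \sum_(i | e \in P i) (lam i - lt i))).
  rewrite lerD2l; apply: ler_sum => e /andP[e2 te].
  have eE : e \in E by move: e2; rewrite inE => /andP[].
  rewrite -mulr_suml.
  have [z|nz] := eqVneq (ld e) 0.
    by rewrite /load in z *; rewrite z mul0r; apply: sumr_ge0 => i _.
  rewrite mulrBr mulr1 mulrC divfK // sumrB; rewrite lerD2l lerN2.
  exact: fc.
rewrite -(exch (fun i e => lam i - lt i) (fun e => tight e)).
apply: (@le_trans _ _ (\sum_i (lam i - lt i) + \sum_i (lam i - lt i) * (bmax P E)%:R)).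
  rewrite lerD2l; apply: ler_sum => i _.
  rewrite sumr_const -[X in X <= _]mulr_natr; apply: ler_wpM2l => //; rewrite ler_nat.
  rewrite /bmax; apply: leq_trans; last exact: leq_bigmax.
  apply: (@leq_trans #|[set e | [&& e \in P i, e \in E2 P E & Ct e <= ld e]]|).
    by rewrite leq_eqVlt; apply/orP; left; apply/eqP; apply: eq_card => e; rewrite inE.
  apply: subset_leq_card; apply/fintype.subsetP => e; rewrite !inE => /andP[-> /andP[]].
  by rewrite andbT.
by rewrite -mulr_suml mulr_natl mulr_natr mulrS.
Qed.

End H.

Theorem lemma3 (R : realType) (V : finType) (E : {set V * V})
    (C : V * V -> R) (gamma : R) (k : nat) (P : 'I_k -> {set V * V})
    (lam : 'I_k -> R) (A : {set V * V}) :
  simple_dag E ->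
  (forall e, e \in E -> 0 <= C e) ->
  0 < gamma -> (forall e, e \in E -> gamma <= C e) ->
  (forall i, is_dipath E (P i)) ->
  (forall i, 0 <= lam i) ->
  (forall e, e \in E -> load P lam e <= C e) ->
  A \subset E ->
  Lambda P E C gamma A lam <= Lambdabar P E C gamma A lam /\
  Lambdabar P E C gamma A lam <= (bmax P E).+1%:R * Lambda P E C gamma A lam.
Proof.
move=> _ _ gpos gE _ lam0 _ _.
set S := [set t | exists lt, feasible P E C gamma A lam lt /\ t = \sum_i lt i]%classic.
have ubS : forall t, S t -> t <= \sum_i lam i.
  move=> t [lt [[_ fb] ->]]; apply: ler_sum => i _; by case/andP: (fb i).
have hub : has_ubound S by exists (\sum_i lam i) => t /ubS.
have feas : feasible P E C gamma A lam (lam2 P E C gamma A lam) by apply: l2_feas.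
have Sl2 : S (\sum_i lam2 P E C gamma A lam i) by exists (lam2 P E C gamma A lam).
have T1 : \sum_i lam2 P E C gamma A lam i <= Tval P E C gamma A lam.
  exact: (ub_le_sup hub).
rewrite /Lambda /Lambdabar; split; first by rewrite lerD2l lerN2.
set X := \sum_i (lam i - lam2 P E C gamma A lam i).
set B := (bmax P E).+1%:R.
have Bpos : 0 < B :> R by rewrite /B ltr0n.
have T2 : Tval P E C gamma A lam <= \sum_i lam i - X / B.
  apply: ge_sup; first by exists (\sum_i lam2 P E C gamma A lam i).
  move=> t [lt [hf ->]].
  have h : X <= B * (\sum_i lam i - \sum_i lt i) by apply: part2.
  have : X / B <= \sum_i lam i - \sum_i lt i by rewrite ler_pdivrMr // mulrC.
  move: (X / B) => Y; lra.
have : X / B <= \sum_i lam i - Tval P E C gamma A lam by move: T2; move: (X / B) => Y; lra.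
rewrite ler_pdivrMr // mulrC /X sumrB => h; exact: h.
Qed.
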